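(* Let $\mathcal{G}=(\mathcal{V},\mathcal{E})$ be a directed graph with terminals $s,t$ and $f:2^{\mathcal{E}}\to\mathbb{R}_+$ normalized, monotone nondecreasing and submodular. Let $\widehat C$ be an $(s,t)$-cut minimizing $\hat f_{\mathrm{pf}}$, and let $C^*$ be a minimal $(s,t)$-cut minimizing $f$. Let $\Delta_s=\{v: \exists (v,u)\in C^*\}$ and $\Delta_t=\{v:\exists (u,v)\in C^*\}$. Then $$f(\widehat C)\le \min\{|\Delta_s|,|\Delta_t|\}\,f(C^* )\le \frac{|\mathcal{V}|}{2}f(C^* ).$$
   Context: An $(s,t)$-cut is a set of edges whose removal disconnects all $s$-$t$ paths; it is minimal if no proper subset is an $(s,t)$-cut. For $C\subseteq\mathcal{E}$, let $\mathcal{P}_C$ be the family of all partitions $\{C^\Pi_v\}_{v\in\mathcal{V}}$ of $C$ obtained by assigning each edge $(u,w)\in C$ either to its tail $u$ or to its head $w$ ($C^\Pi_v$ = edges assigned to $v$, possibly empty), and $\hat f_{\mathrm{pf}}(C)=\min_{\Pi(C)\in\mathcal{P}_C}\sum_{v\in\mathcal{V}}f(C^\Pi_v)$. *)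

(* Defs.v *)
From HB Require Import structures.
From mathcomp Require Import all_boot all_order all_algebra.
Set Implicit Arguments. Unset Strict Implicit. Unset Printing Implicit Defensive.
Import Order.TTheory GRing.Theory Num.Theory.
Local Open Scope ring_scope.

Section Graph.
Variables (V Ed : finType) (tail head : Ed -> V).

Definition adj_without (C : {set Ed}) : rel V :=
  fun u w => [exists e, (e \notin C) && (tail e == u) && (head e == w)].

Definition is_cut (s t : V) (C : {set Ed}) : bool :=
  ~~ connect (adj_without C) s t.

Definition is_minimal_cut (s t : V) (C : {set Ed}) : Prop :=
  is_cut s t C /\ forall D : {set Ed}, D \proper C -> ~~ is_cut s t D.

(* block of the partition of C induced by the assignment g
   (g e = true: edge e assigned to its tail; false: to its head) *)
Definition pblock_of (C : {set Ed}) (g : {ffun Ed -> bool}) (v : V) : {set Ed} :=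
  [set e in C | if g e then tail e == v else head e == v].

Variable R : realFieldType.
Variable f : {set Ed} -> R.

Definition pf_cost (C : {set Ed}) (g : {ffun Ed -> bool}) : R :=
  \sum_(v : V) f (pblock_of C g v).

Definition f_pf (C : {set Ed}) : R :=
  \big[Num.min/pf_cost C [ffun=> true]]_(g : {ffun Ed -> bool}) pf_cost C g.

Definition Delta_s (C : {set Ed}) : {set V} := [set v | [exists e in C, tail e == v]].
Definition Delta_t (C : {set Ed}) : {set V} := [set v | [exists e in C, head e == v]].

End Graph.

Definition normalized (T : finType) (R : realFieldType) (f : {set T} -> R) :=
  f set0 = 0.
Definition nonneg_fun (T : finType) (R : realFieldType) (f : {set T} -> R) :=
  forall A, 0 <= f A.
Definition monotone_set_fun (T : finType) (R : realFieldType) (f : {set T} -> R) :=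
  forall A B : {set T}, A \subset B -> f A <= f B.
Definition submodular (T : finType) (R : realFieldType) (f : {set T} -> R) :=
  forall A B : {set T}, f (A :|: B) + f (A :&: B) <= f A + f B.

(* Main.v *)
Require Import Defs.
From HB Require Import structures.
From mathcomp Require Import all_boot all_order all_algebra.
From mathcomp Require Import lra zify.
Import Order.TTheory GRing.Theory Num.Theory.
Local Open Scope ring_scope.

Lemma closed_reach (V : finType) (e : rel V) (P : pred V) x y :
  P x -> (forall u w, P u -> e u w -> P w) -> connect e x y -> P y.
Proof.
move=> Px Hc /connectP [p pth ->].
elim: p x Px pth => [|z p IH] x Px //= /andP [exz pz].
exact: (IH z (Hc _ _ Px exz) pz).
Qed.

Lemma subadd (T : finType) (R : realFieldType) (f : {set T} -> R) (I : finType)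
  (A : I -> {set T}) :
  nonneg_fun f -> normalized f -> submodular f ->
  f (\bigcup_(i : I) A i) <= \sum_(i : I) f (A i).
Proof.
move=> fn f0 fs.
apply: (big_ind2 (fun X r => f X <= r)); first by rewrite f0.
  move=> X1 x2 Y1 y2 h1 h2.
  have := fs X1 Y1; have := fn (X1 :&: Y1); lra.
by move=> i _.
Qed.

Lemma fpf_le (V Ed : finType) (tail head : Ed -> V) (R : realFieldType)
  (f : {set Ed} -> R) C g : f_pf tail head f C <= pf_cost tail head f C g.
Proof.
rewrite /f_pf (bigD1 g) //=; by rewrite ge_min lexx.
Qed.

Lemma fpf_ge (V Ed : finType) (tail head : Ed -> V) (R : realFieldType)
  (f : {set Ed} -> R) C :
  nonneg_fun f -> normalized f -> monotone_set_fun f -> submodular f ->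
  f C <= f_pf tail head f C.
Proof.
move=> fn f0 fm fs.
have H g : f C <= pf_cost tail head f C g.
  rewrite /pf_cost; apply: (le_trans _ (@subadd _ _ f _ (pblock_of tail head C g) fn f0 fs)); apply: fm.
  apply/subsetP => e eC; apply/bigcupP; exists (if g e then tail e else head e) => //.
  by rewrite /pblock_of inE eC /=; case: (g e).
rewrite /f_pf; apply: (big_ind (fun x => f C <= x)) => //.
by move=> x y hx hy; rewrite le_min hx hy.
Qed.

Lemma cost_bound (V Ed : finType) (tail head : Ed -> V) (R : realFieldType)
  (f : {set Ed} -> R) C (b : bool) (D : {set V}) :
  normalized f -> monotone_set_fun f ->
  (forall v, v \notin D -> pblock_of tail head C [ffun=> b] v = set0) ->
  pf_cost tail head f C [ffun=> b] <= #|D|%:R * f C.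
Proof.
move=> f0 fm HD.
rewrite /pf_cost (@le_trans _ _ (\sum_(v : V) (if v \in D then f C else 0))) //.
  apply: ler_sum => v _; case: ifP => vD.
    by apply: fm; apply/subsetP => e; rewrite inE => /andP[].
  by rewrite HD ?vD // f0.
by rewrite -big_mkcond /= sumr_const mulr_natl.
Qed.

Theorem theorem3 (V Ed : finType) (tail head : Ed -> V) (s t : V)
  (R : realFieldType) (f : {set Ed} -> R)
  (f_nonneg : nonneg_fun f) (f_norm : normalized f)
  (f_mono : monotone_set_fun f) (f_sub : submodular f)
  (Chat Cstar : {set Ed})
  (Chat_cut : is_cut tail head s t Chat)
  (Chat_min : forall C, is_cut tail head s t C ->
                f_pf tail head f Chat <= f_pf tail head f C)
  (Cstar_minimal : is_minimal_cut tail head s t Cstar)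
  (Cstar_min : forall C, is_cut tail head s t C -> f Cstar <= f C) :
  f Chat <= (minn #|Delta_s tail Cstar| #|Delta_t head Cstar|)%:R * f Cstar /\
  (minn #|Delta_s tail Cstar| #|Delta_t head Cstar|)%:R * f Cstar
    <= (#|V|%:R / 2) * f Cstar.
Proof.
case: Cstar_minimal => Ccut Cmin.
have base : f Chat <= f_pf tail head f Cstar.
  exact: le_trans (@fpf_ge _ _ tail head _ f Chat f_nonneg f_norm f_mono f_sub) (Chat_min _ Ccut).
have hs : f Chat <= #|Delta_s tail Cstar|%:R * f Cstar.
  apply: (le_trans base); apply: (le_trans (@fpf_le _ _ tail head _ f Cstar [ffun=> true])).
  apply: (@cost_bound _ _ tail head _ f) => // v vD; apply/setP => e; rewrite /pblock_of !inE ffunE.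
  apply/negbTE; apply/andP => -[eC /eqP tv]; move: vD; rewrite inE.
  by case/existsP; exists e; rewrite eC tv eqxx.
have ht : f Chat <= #|Delta_t head Cstar|%:R * f Cstar.
  apply: (le_trans base); apply: (le_trans (@fpf_le _ _ tail head _ f Cstar [ffun=> false])).
  apply: (@cost_bound _ _ tail head _ f) => // v vD; apply/setP => e; rewrite /pblock_of !inE ffunE.
  apply/negbTE; apply/andP => -[eC /eqP tv]; move: vD; rewrite inE.
  by case/existsP; exists e; rewrite eC tv eqxx.
split.
  by case: (leqP #|Delta_s tail Cstar| #|Delta_t head Cstar|).
set S := [set v | connect (adj_without tail head Cstar) s v].
have key : forall e, e \in Cstar -> (tail e \in S) && (head e \notin S).
  move=> e eC.
  have prop : (Cstar :\ e) \proper Cstar by apply: properD1.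
  have := Cmin _ prop; rewrite /is_cut negbK => conD.
  have clos : forall u w, u \in S -> adj_without tail head (Cstar :\ e) u w ->
      (w \in S) \/ (u = tail e /\ w = head e).
    move=> u w uS /existsP [e' /andP [/andP [e'D /eqP tu] /eqP hw]].
    case: (eqVneq e' e) => [<- | ne]; first by right; rewrite tu hw.
    left; move: uS; rewrite !inE => uS.
    apply: (connect_trans uS); apply: connect1; apply/existsP; exists e'.
    move: e'D; rewrite !inE ne /= => ->; by rewrite tu hw !eqxx.
  have tnS : t \notin S by rewrite inE.
  apply/andP; split.
    apply/negPn/negP => teS; apply: (negP tnS).
    apply: (@closed_reach _ _ (fun v => v \in S) _ _ _ _ conD).
      by rewrite inE connect0.
    move=> u w uS adj; case: (clos u w uS adj) => // -[ue _].
    by move: uS; rewrite ue (negbTE teS).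
  apply/negP => heS; apply: (negP tnS).
  apply: (@closed_reach _ _ (fun v => v \in S) _ _ _ _ conD).
    by rewrite inE connect0.
  by move=> u w uS adj; case: (clos u w uS adj) => // -[_ ->].
have disj : [disjoint Delta_s tail Cstar & Delta_t head Cstar].
  apply/pred0P => v /=; apply/negbTE/andP => -[].
  rewrite !inE => /existsP [e1 /andP [e1C /eqP t1]] /existsP [e2 /andP [e2C /eqP h2]].
  have := key _ e1C; have := key _ e2C; rewrite t1 h2.
  by case/andP => _ /negbTE -> /andP [].
have hcard : (#|Delta_s tail Cstar| + #|Delta_t head Cstar| <= #|V|)%N.
  by rewrite -cardsUI (disjoint_setI0 disj) cards0 addn0 max_card.
have hmin : (2 * minn #|Delta_s tail Cstar| #|Delta_t head Cstar| <= #|V|)%N.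
  lia.
have fC := f_nonneg Cstar.
have : (2 * minn #|Delta_s tail Cstar| #|Delta_t head Cstar|)%:R <= #|V|%:R :> R
  by rewrite ler_nat.
rewrite natrM.
move: (minn _ _)%:R (#|V|%:R : R) => a b hab.
rewrite -subr_ge0 -mulrBl; apply: mulr_ge0 => //; lra.
Qed.
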